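(* Let $m\in\mathbb N$. Let $\mathbf X=(X_1,\dots,X_n)$ be (possibly dependent) component lifetimes and $\mathbf Y_i=(Y_{i1},\dots,Y_{in})$, $i=1,\dots,m$, be vectors of spare lifetimes, all $X_j$ and $Y_{ij}$ identically distributed as $X$. Let $T_C=\tau(\mathbf Z)$, where $Z_j=\max\{X_j,Y_{1j},\dots,Y_{mj}\}$ with $X_j,Y_{1j},\dots,Y_{mj}$ independent, and $T_S=\max\{\tau(\mathbf X),\tau(\mathbf Y_1),\dots,\tau(\mathbf Y_m)\}$ with $\tau(\mathbf X),\tau(\mathbf Y_1),\dots,\tau(\mathbf Y_m)$ independent, where $\tau$ is a coherent structure and $\tau(\mathbf X),\tau(\mathbf Y_i),\tau(\mathbf Z)$ all have the same domination function $h$; thus $\bar F_{T_C}(x)=h\big(1-(1-\bar F_X(x))^{m+1}\big)$ and $F_{T_S}(x)=\big(1-h(\bar F_X(x))\big)^{m+1}$. Let $R(p)=(1-p)h'(p)/(1-h(p))$, $p\in(0,1)$. Then $T_S\underset{b}{\prec}T_C$ holds if and only if $R(p)/R\big(1-(1-p)^{m+1}\big)$ is increasing in $p\in(0,1)$.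
   Context: All random variables are non-negative and absolutely continuous with support $[0,\infty)$. For a random variable $W$: density $f_W$, cdf $F_W$, survival $\bar F_W=1-F_W$, reversed hazard rate $\tilde r_W=f_W/F_W$. $U\underset{b}{\prec}V$ means $\tilde r_U(x)/\tilde r_V(x)$ is decreasing in $x\ge0$. The domination function $h:[0,1]\to[0,1]$ of a coherent system whose components have common marginal survival function $\bar G$ is the function (depending on structure and survival copula) with system reliability $h(\bar G(x))$; it is increasing, continuous, $h(0)=0$, $h(1)=1$, assumed differentiable. ''Increasing'' means non-decreasing, ''decreasing'' means non-increasing. *)

(* Defs.v *)
From HB Require Import structures.
From mathcomp Require Import all_boot all_order all_algebra.
From mathcomp Require Import all_classical all_reals all_analysis.
Set Implicit Arguments. Unset Strict Implicit. Unset Printing Implicit Defensive.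
Import Order.TTheory GRing.Theory Num.Theory.
Import numFieldNormedType.Exports.
Local Open Scope classical_set_scope.
Local Open Scope ring_scope.

Section Defs.
Variable R : realType.

(* Standing assumptions on the common marginal cdf F = F_X: absolutely
   continuous with support [0, +oo); its density is its derivative, assumed
   positive on (0, +oo) so that reversed hazard ratios are well defined. *)
Definition lifetime_cdf (F : R -> R) : Prop :=
  [/\ (forall x, x <= 0 -> F x = 0),
      continuous F,
      (forall x y, 0 <= x -> x < y -> F x < F y),
      F x @[x --> +oo] --> (1 : R)
    & (forall x, 0 < x -> derivable F x 1 /\ 0 < derive1 F x)].

Definition domination_fun (h : R -> R) : Prop :=
  [/\ (forall p q, 0 <= p -> p <= q -> q <= 1 -> h p <= h q),
      {within `[0, 1], continuous h},
      h 0 = 0, h 1 = 1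
    & (forall p, 0 < p < 1 -> derivable h p 1)].

Definition rhr (Fw : R -> R) (x : R) : R := derive1 Fw x / Fw x.

(* U <_b V : rhr U / rhr V decreasing (on the open half-line, where the
   reversed hazard rates are defined) *)
Definition b_order (FU FV : R -> R) : Prop :=
  forall x y, 0 < x -> x <= y -> rhr FU y / rhr FV y <= rhr FU x / rhr FV x.

Definition sf (F : R -> R) (x : R) : R := 1 - F x.
Definition cdf_TS (h : R -> R) (m : nat) (F : R -> R) (x : R) : R :=
  (1 - h (sf F x)) ^+ m.+1.
Definition cdf_TC (h : R -> R) (m : nat) (F : R -> R) (x : R) : R :=
  1 - h (1 - (1 - sf F x) ^+ m.+1).

Definition Rfun (h : R -> R) (p : R) : R := (1 - p) * derive1 h p / (1 - h p).

End Defs.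

(* Main.v *)
Require Import Defs.
From HB Require Import structures.
From mathcomp Require Import all_boot all_order all_algebra.
From mathcomp Require Import all_classical all_reals all_analysis.
Import Order.TTheory GRing.Theory Num.Theory.
Local Open Scope ring_scope.
From mathcomp Require Import ring lra.

Lemma dsf (R : realType) (F : R -> R) (x f' : R) :
  is_derive x 1 F f' -> is_derive x 1 (sf F) (- f').
Proof.
move=> dF; have -> : sf F = (cst 1 - F) by apply/funext=> y.
by have := is_deriveB (is_derive_cst (1:R) x 1) dF; rewrite sub0r.
Qed.

Lemma dTS (R : realType) (m : nat) (h F : R -> R) (x f' a : R) :
  is_derive x 1 F f' -> is_derive (sf F x) 1 h a ->
  is_derive x 1 (cdf_TS h m F) (m.+1%:R * (1 - h (sf F x)) ^+ m * - (a * - f')).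
Proof.
move=> dF dh.
have d1 : is_derive x 1 (sf F) (- f') by apply: dsf.
have d2 : is_derive x 1 (h \o sf F) (a * - f') by exact: is_derive1_comp.
have d3 : is_derive x 1 (cst 1 - (h \o sf F)) (- (a * - f')).
  by have := is_deriveB (is_derive_cst (1:R) x 1) d2; rewrite sub0r.
have := is_deriveX m.+1 d3.
have -> : (cst 1 - (h \o sf F)) ^+ m.+1 = cdf_TS h m F.
  by apply/funext=> y; rewrite /cdf_TS exprfctE.
done.
Qed.

Lemma dTC (R : realType) (m : nat) (h F : R -> R) (x f' c : R) :
  is_derive x 1 F f' -> is_derive (1 - (1 - sf F x) ^+ m.+1) 1 h c ->
  is_derive x 1 (cdf_TC h m F)
    (- (c * - (m.+1%:R * (1 - sf F x) ^+ m * - - f'))).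
Proof.
move=> dF dh.
have d1 : is_derive x 1 (sf F) (- f') by apply: dsf.
have d1' : is_derive x 1 (cst 1 - sf F) (- - f').
  by have := is_deriveB (is_derive_cst (1:R) x 1) d1; rewrite sub0r.
have d2 := is_deriveX m.+1 d1'.
have d3 : is_derive x 1 (cst 1 - (cst 1 - sf F) ^+ m.+1)
   (- (m.+1%:R * (1 - sf F x) ^+ m * - - f')).
  by have := is_deriveB (is_derive_cst (1:R) x 1) d2; rewrite sub0r exprfctE.
have d4 : is_derive x 1 (h \o (cst 1 - (cst 1 - sf F) ^+ m.+1))
   (c * - (m.+1%:R * (1 - sf F x) ^+ m * - - f')).
  by apply: is_derive1_comp => //; rewrite exprfctE.
have := is_deriveB (is_derive_cst (1:R) x 1) d4; rewrite sub0r.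
have -> : cst 1 - (h \o (cst 1 - (cst 1 - sf F) ^+ m.+1)) = cdf_TC h m F.
  by apply/funext=> y; rewrite /cdf_TC exprfctE.
done.
Qed.
Lemma alg (R : realType) (k : nat) (u a b c d f : R) : u != 0 -> f != 0 ->
 (k.+1%:R * b^+k * -(a * -f)) / b^+k.+1 / (-(c * -(k.+1%:R * u^+k * - - f)) / d)
 = (u * a / b) / ((1 - (1 - u^+k.+1)) * c / d).
Proof.
move=> u0 f0.
have [->|b0] := eqVneq b 0.
  by rewrite [0 ^+ k.+1]expr0n /= invr0 !(mulr0, mul0r).
have k0 : k.+1%:R != 0 :> R by rewrite pnatr_eq0.
rewrite !(invfM, invrN, invrK, opprK, mulrN, mulNr).
move: (c^-1) => ci.
rewrite subKr !exprS.
have U0 : u ^+ k != 0 by rewrite expf_neq0.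
have B0 : b ^+ k != 0 by rewrite expf_neq0.
move: (u ^+ k) (b ^+ k) U0 B0 => U B U0 B0.
have k1 : 1 + k%:R != 0 :> R by rewrite addrC natr1 pnatr_eq0.
by field; rewrite U0 u0 b0 f0 k1 B0.
Qed.
Section S5.
Import numFieldNormedType.Exports.
Lemma near_pinfty_ex (R : realType) (y : R) (P : R -> Prop) :
  (\forall z \near +oo, P z) -> exists z, y < z /\ P z.
Proof.
move=> [M [_ HM]].
exists (Num.max M y + 1); split.
  by rewrite ltr_pwDr // le_max lexx orbT.
apply: HM; rewrite ltr_pwDr // le_max lexx //.
Qed.

Lemma F_lt1 (R : realType) (F : R -> R) : lifetime_cdf F -> forall x, 0 <= x -> F x < 1.
Proof.
move=> [F0 Fc Fi Flim Fd] x x0.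
have Fx1 : F x < F (x + 1) by apply: Fi; rewrite // ltrDl.
rewrite (lt_le_trans Fx1) //; rewrite leNgt; apply/negP => H.
have Hn : \forall t \near +oo, F t < F (x + 1) by exact: cvgr_lt 1 Flim _ H.
have [z [xz Hz]] := near_pinfty_ex _ (x + 1) _ Hn.
have : F (x + 1) < F z by apply: Fi => //; rewrite addr_ge0.
by rewrite ltNge (ltW Hz).
Qed.

Lemma F_gt0 (R : realType) (F : R -> R) : lifetime_cdf F -> forall x, 0 < x -> 0 < F x.
Proof.
move=> [F0 Fc Fi Flim Fd] x x0.
by rewrite -(F0 0 (lexx 0)); apply: Fi.
Qed.

Lemma F_surj (R : realType) (F : R -> R) : lifetime_cdf F ->
  forall v, 0 < v < 1 -> exists x, 0 < x /\ F x = v.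
Proof.
move=> HF v /andP[v0 v1].
have HF' := HF; case: HF' => [F0 Fc Fi Flim Fd].
have Hn : \forall t \near +oo, v < F t by exact: cvgr_gt 1 Flim _ v1.
have [b [b0 Hb]] := near_pinfty_ex _ 0 _ Hn.
have [c cab Fc'] : exists2 c, c \in `[0, b] & F c = v.
  apply: IVT; first exact: ltW.
    exact: continuous_subspaceT.

  rewrite F0 // ge_min le_max (ltW v0) /= (ltW Hb) orbT //.
exists c; split => //.
rewrite lt_neqAle; move: cab; rewrite in_itv /= => /andP[-> _]; rewrite andbT.
apply/eqP => c0; move: Fc'; rewrite -c0 F0 // => v00.
by move: v0; rewrite -v00 ltxx.
Qed.
End S5.
Arguments F_gt0 {R F}.
Arguments F_lt1 {R F}.
Arguments F_surj {R F}.
Arguments dTS {R} m {h F x f' a}.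
Arguments dTC {R} m {h F x f' c}.

Lemma ratio (R : realType) (m : nat) (h F : R -> R) (x : R) :
  domination_fun h -> lifetime_cdf F -> 0 < x ->
  rhr (cdf_TS h m F) x / rhr (cdf_TC h m F) x
  = Rfun h (sf F x) / Rfun h (1 - (1 - sf F x) ^+ m.+1).
Proof.
move=> [_ _ _ _ hd] HF x0.
have Fx0 := F_gt0 HF _ x0.
have Fx1 := F_lt1 HF _ (ltW x0).
have [_ _ _ _ Fd] := HF.
have [dFx f0] := Fd x x0.
have dF : is_derive x 1 F (derive1 F x) by rewrite derive1E; apply: derivableP.
have p01 : 0 < sf F x < 1 by rewrite /sf; apply/andP; split; lra.
have uE : 1 - sf F x = F x by rewrite /sf; ring.
have q01 : 0 < 1 - (1 - sf F x) ^+ m.+1 < 1.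
  rewrite uE; apply/andP; split.
    by rewrite subr_gt0 exprn_ilt1 // ltW.
  by rewrite ltrBlDr ltrDl exprn_gt0.
have dhp : is_derive (sf F x) 1 h (derive1 h (sf F x)).
  by rewrite derive1E; apply: derivableP; apply: hd.
have dhq : is_derive (1 - (1 - sf F x) ^+ m.+1) 1 h
             (derive1 h (1 - (1 - sf F x) ^+ m.+1)).
  by rewrite derive1E; apply: derivableP; apply: hd.
have e1 := dTS m dF dhp.
have e2 := dTC m dF dhq.
rewrite /rhr !derive1E (derive_val (is_derive := e1)) (derive_val (is_derive := e2)).
rewrite /cdf_TS /cdf_TC /Rfun.
apply: alg; first by rewrite uE gt_eqF.
by rewrite gt_eqF.
Qed.

Theorem theorem4p2 (R : realType) (m : nat) (h F : R -> R) :
  domination_fun h -> lifetime_cdf F ->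
  (b_order (cdf_TS h m F) (cdf_TC h m F) <->
   (forall p q : R, 0 < p -> p <= q -> q < 1 ->
      Rfun h p / Rfun h (1 - (1 - p) ^+ m.+1)
      <= Rfun h q / Rfun h (1 - (1 - q) ^+ m.+1))).
Proof.
move=> Hh HF; have [F0 Fc Fi Flim Fd] := HF.
split.
- move=> Hb p q p0 pq q1.
  have [y [y0 Fy]] : exists y, 0 < y /\ F y = 1 - q.
    by apply: F_surj => //; apply/andP; split; lra.
  have [x [x0 Fx]] : exists x, 0 < x /\ F x = 1 - p.
    by apply: F_surj => //; apply/andP; split; lra.
  have yx : y <= x.
    rewrite leNgt; apply/negP => xy.
    have := Fi x y (ltW x0) xy; rewrite Fx Fy; lra.
  have := Hb y x y0 yx.
  rewrite !ratio // /sf Fx Fy.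
  by rewrite !subKr.
- move=> HG x y x0 xy.
  rewrite !ratio //; last exact: lt_le_trans xy.
  have y0 : 0 < y by exact: lt_le_trans xy.
  have Fy0 := F_gt0 HF _ y0.
  have Fx1 := F_lt1 HF _ (ltW x0).
  have Fxy : F x <= F y.
    move: xy; rewrite le_eqVlt => /orP[/eqP -> // | xy].
    by apply/ltW/Fi => //; apply: ltW.
  have Fy1 := F_lt1 HF _ (ltW y0).
  have Fx0 := F_gt0 HF _ x0.
  apply: HG; rewrite /sf; lra.
Qed.
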